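(* Let $h\in\mathbb{Z}[t]$ be a monic polynomial of degree $k$ with coefficients in $\{0,1\}$ whose reduction mod $2$ is irreducible over $GF(2)$, so that $GF(2^k)$ is identified with the set of polynomials of degree $<k$ with coefficients in $\{0,1\}$, with arithmetic modulo $2$ and $h$; identify its additive group with $G=\mathbb{Z}_2^k$ via coefficient vectors, and let $\tilde G=\mathbb{R}_2^k$. For $x\in G$, regarded as an integer polynomial, let $\rho(x)\in\mathbb{Z}[t]$ be the remainder of $x^2$ upon division by $h$ in $\mathbb{Z}[t]$ (degree $<k$), and define $f(x)\in\tilde G$ as the coefficient vector of $\rho(x)/2$ with each coefficient taken modulo $2$. Then for all $g_1,g_2,g_3,g_4\in G$ with $g_1+g_2=g_3+g_4$ (in $G$) and $\{g_1,g_2\}\neq\{g_3,g_4\}$, the element $f(g_1)+f(g_2)-f(g_3)-f(g_4)\in\tilde G$ has all coordinates integers (mod $2$) and is nonzero, i.e. lies in $G\setminus\{0\}$.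
   Context: $\mathbb{R}_2$ denotes the additive group of reals modulo $2$, and $G=\mathbb{Z}_2^k\subset\tilde G=\mathbb{R}_2^k$. *)

(* Defs.v *)
From HB Require Import structures.
From mathcomp Require Import all_boot all_order all_algebra.
Set Implicit Arguments. Unset Strict Implicit. Unset Printing Implicit Defensive.
Import Order.TTheory GRing.Theory Num.Theory.
Local Open Scope ring_scope.

Definition liftZ (k : nat) (g : 'rV['F_2]_k) : {poly int} :=
  \sum_(j < k) ((val (g 0 j))%:Z) *: 'X^j.

(* rho(x) = remainder of x^2 upon division by h in Z[t] (h monic, so %% is
   the genuine Euclidean remainder). *)
Definition rho (h : {poly int}) (k : nat) (g : 'rV['F_2]_k) : {poly int} :=
  (liftZ g ^+ 2) %% h.

(* Real representative of the i-th coordinate of f(g): rho(g)_i / 2 (a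
   rational number, taken modulo 2). *)
Definition fQ (h : {poly int}) (k : nat) (g : 'rV['F_2]_k) (i : 'I_k) : rat :=
  ((rho h g)`_i)%:~R / 2.

Definition eqmod2 (x y : rat) : Prop := (x - y) / 2 \is a Num.int.

(* Main.v *)
Require Import Defs.
From HB Require Import structures.
From mathcomp Require Import all_boot all_order all_algebra.
From Stdlib Require Import Classical.
Import Order.TTheory GRing.Theory Num.Theory.
Set Implicit Arguments. Unset Strict Implicit. Unset Printing Implicit Defensive.
Local Open Scope ring_scope.

Notation F2 := 'F_2.
Notation phi := (fun z : int => z%:~R : F2).
Notation mp := (map_poly phi).

Lemma pr2 : prime 2. Proof. by []. Qed.

Lemma F2_two : (2%:R : F2) = 0.
Proof. exact: (GRing.pcharf0 (pchar_Fp pr2)). Qed.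

Lemma F2p_two (p : {poly F2}) : p *+ 2 = 0.
Proof. by rewrite -mulr_natr -polyC_natr F2_two mulr0. Qed.

Lemma phi_even (z : int) : (z%:~R : F2) = 0 -> z = (z %/ 2)%Z * 2.
Proof.
move=> H; have : (2 %| z)%Z by rewrite (dvdz_pcharf (pchar_Fp pr2)); apply/eqP.
by move=> /divzK ->.
Qed.

Lemma even_poly (p : {poly int}) : mp p = 0 -> p = (\poly_(i < size p) (p`_i %/ 2)%Z) *+ 2.
Proof.
move=> H; apply/polyP=> i; rewrite coefMn coef_poly.
case: ltnP => Hi; last by rewrite nth_default.
have Hz : ((p`_i)%:~R : F2) = 0 by move: (congr1 (fun q : {poly F2} => q`_i) H); rewrite coef_map coef0.
rewrite {1}(phi_even Hz) mulr2n; rewrite mulrDr mulr1 //=.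
Qed.

Definition lp k (g : 'rV[F2]_k) : {poly F2} := \sum_(j < k) g 0 j *: 'X^j.

Lemma lpD k (g g' : 'rV[F2]_k) : lp (g + g') = lp g + lp g'.
Proof. by rewrite /lp -big_split; apply: eq_bigr => j _; rewrite mxE scalerDl. Qed.

Lemma coef_lp k (g : 'rV[F2]_k) (i : 'I_k) : (lp g)`_i = g 0 i.
Proof.
rewrite /lp coef_sum (bigD1 i) //= coefZ coefXn eqxx mulr1 big1 ?addr0 //.
move=> j Hj; rewrite coefZ coefXn; case: eqP; last by rewrite mulr0.
by move=> E; move: Hj; rewrite (val_inj E) eqxx.
Qed.

Lemma coef_lp_big k (g : 'rV[F2]_k) (i : nat) : (k <= i)%N -> (lp g)`_i = 0.
Proof.
move=> Hi; rewrite /lp coef_sum big1 // => j _; rewrite coefZ coefXn; case: eqP; last by rewrite mulr0.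
by move=> E; move: (ltn_ord j); rewrite -E ltnNge Hi.
Qed.

Lemma size_lp k (g : 'rV[F2]_k) : (size (lp g) <= k)%N.
Proof. by apply/leq_sizeP => j; apply: coef_lp_big. Qed.

Lemma lp_inj k (g g' : 'rV[F2]_k) : lp g = lp g' -> g = g'.
Proof.
move=> E; apply/rowP => j.
move: (congr1 (fun q : {poly F2} => q`_j) E); by rewrite !coef_lp.
Qed.

Lemma map_liftZ k (g : 'rV[F2]_k) : mp (liftZ g) = lp g.
Proof.
apply/polyP => i; rewrite coef_map /liftZ /lp !coef_sum /= mulrz_sumr; apply: eq_bigr => j _.
rewrite !coefZ !coefXn; case: eqP => _; last by rewrite !mulr0.
rewrite !mulr1 /=; exact: (natr_Zp (g 0 j)).
Qed.

Lemma lin4 (R : zmodType) (a1 a2 a3 a4 b1 b2 b3 b4 : R) :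
  (a1 + b1) + (a2 + b2) - (a3 + b3) - (a4 + b4) = (a1 + a2 - a3 - a4) + (b1 + b2 - b3 - b4).
Proof.
have -> : (a1 + b1) + (a2 + b2) = (a1 + a2) + (b1 + b2) by rewrite addrACA.
rewrite [- (a3 + b3)]opprD addrACA [- (a4 + b4)]opprD; exact: addrACA.
Qed.

Lemma sq_sum (R : comPzRingType) (a b : R) : a ^+ 2 + b ^+ 2 = (a + b) ^+ 2 - (a * b) *+ 2.
Proof. by rewrite sqrrD addrAC addrK. Qed.

Lemma idP4 (R : comPzRingType) (x1 x2 x3 x4 e : R) : x1 + x2 - (x3 + x4) = e *+ 2 ->
 x1 ^+ 2 + x2 ^+ 2 - x3 ^+ 2 - x4 ^+ 2 = (e * (x1 + x2 + (x3 + x4)) - x1 * x2 + x3 * x4) *+ 2.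
Proof.
move=> H.
have -> : x1 ^+ 2 + x2 ^+ 2 - x3 ^+ 2 - x4 ^+ 2 = (x1 ^+ 2 + x2 ^+ 2) - (x3 ^+ 2 + x4 ^+ 2).
  by rewrite opprD addrA.
rewrite !sq_sum opprB addrA (addrAC _ (x3 * x4 *+ 2)) (addrAC _ (- (x1 * x2 *+ 2))) subr_sqr H mulrnAl.
by rewrite mulrnDl mulrnBl.
Qed.

Lemma id2 (R : comPzRingType) (a b c d : R) : a + b = c + d -> - (a * b) + c * d = (a - c) * (a - d).
Proof.
move=> H; have -> : b = c + d - a by rewrite -H addrC addKr.
rewrite mulrBr mulrDr mulrBl !mulrBr opprB (mulrC c a) opprD opprB !addrA.
by rewrite (addrAC (a * a)) (addrAC (a * a - a * d)).
Qed.

Lemma irr_dvdM (F : fieldType) (p a b : {poly F}) :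
  irreducible_poly p -> p %| a * b -> (p %| a) || (p %| b).
Proof.
move=> irr H; case: (irredp_XsubCP irr (dvdp_gcdl p b)) => E.
  by rewrite -(Gauss_dvdpl _ (_ : coprimep p b)) ?H // -gcdp_eqp1.
by rewrite -(eqp_dvdl b E) dvdp_gcdr orbT.
Qed.

Lemma two_inj (x y : {poly int}) : x *+ 2 = y *+ 2 -> x = y.
Proof.
rewrite -[x *+ 2]mulr_natr -[y *+ 2]mulr_natr; apply: mulIf.
by rewrite -polyC_natr polyC_eq0.
Qed.

Lemma rat_two (z : int) : ((z *+ 2)%:~R : rat) = z%:~R * 2.
Proof. by rewrite -[z *+ 2]mulr_natr intrM. Qed.

Lemma mpD (p q : {poly int}) : mp (p + q) = mp p + mp q. Proof. by rewrite rmorphD. Qed.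
Lemma mpB (p q : {poly int}) : mp (p - q) = mp p - mp q. Proof. by rewrite rmorphB. Qed.
Lemma mpN (p : {poly int}) : mp (- p) = - mp p. Proof. by rewrite rmorphN. Qed.
Lemma mpM (p q : {poly int}) : mp (p * q) = mp p * mp q. Proof. by rewrite rmorphM. Qed.
Lemma mpMn (p : {poly int}) : mp (p *+ 2) = 0. Proof. by rewrite rmorphMn F2p_two. Qed.

Unset Implicit Arguments.
Theorem lemma13 (k : nat) (h : {poly int})
  (h_monic : h \is monic)
  (h_size : size h = k.+1)
  (h_coef : forall i : nat, h`_i = 0 \/ h`_i = 1)
  (h_irr : irreducible_poly (map_poly (fun z : int => z%:~R : 'F_2) h))
  (g1 g2 g3 g4 : 'rV['F_2]_k)
  (hsum : g1 + g2 = g3 + g4)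
  (hne : [set g1; g2] != [set g3; g4]) :
  let D := fun i : 'I_k => fQ h g1 i + fQ h g2 i - fQ h g3 i - fQ h g4 i in
  (forall i : 'I_k, exists n : int, eqmod2 (D i) n%:~R) /\
  (exists i : 'I_k, ~ eqmod2 (D i) 0).
Proof.
move=> D.
have hl : lead_coef h = 1 by apply/monicP.
have hn0 : h != 0 by apply: monic_neq0.
have dv : forall g : 'rV[F2]_k, exists q, liftZ g ^+ 2 = q * h + rho h g.
  move=> g; exists (liftZ g ^+ 2 %/ h).
  by have := Pdiv.Idomain.divp_eq (liftZ g ^+ 2) h; rewrite hl expr1n scale1r.
have sz : forall (g : 'rV[F2]_k) j, (k <= j)%N -> (rho h g)`_j = 0.
  move=> g j Hj; apply: nth_default; apply: leq_trans Hj.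
  by rewrite -ltnS -h_size ltn_modpN0.
have [q1 Hq1] := dv g1; have [q2 Hq2] := dv g2.
have [q3 Hq3] := dv g3; have [q4 Hq4] := dv g4.
set x1 := liftZ g1 in Hq1 *; set x2 := liftZ g2 in Hq2 *.
set x3 := liftZ g3 in Hq3 *; set x4 := liftZ g4 in Hq4 *.
set r := rho h g1 + rho h g2 - rho h g3 - rho h g4.
set Q := q1 + q2 - q3 - q4.
have HP : x1 ^+ 2 + x2 ^+ 2 - x3 ^+ 2 - x4 ^+ 2 = Q * h + r.
  by rewrite Hq1 Hq2 Hq3 Hq4 lin4 /Q !mulrBl mulrDl.
have He : mp (x1 + x2 - (x3 + x4)) = 0.
  by rewrite mpB !mpD !map_liftZ -!lpD hsum subrr.
set e := \poly_(i < size (x1 + x2 - (x3 + x4))) ((x1 + x2 - (x3 + x4))`_i %/ 2)%Z.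
have He2 : x1 + x2 - (x3 + x4) = e *+ 2 by apply: even_poly.
set S := e * (x1 + x2 + (x3 + x4)) - x1 * x2 + x3 * x4.
have HS := idP4 He2; rewrite -/S in HS.
have Hr : r = S *+ 2 - Q * h by rewrite -HS HP addrC addKr.
have rsz : forall j, (k <= j)%N -> r`_j = 0.
  by move=> j Hj; rewrite /r !coefB coefD !(sz _ _ Hj) addr0 !subr0.
have hbs : size (mp h) = k.+1 by rewrite size_map_poly_id0 // hl oner_neq0.
have hbn0 : mp h != 0 by rewrite -size_poly_eq0 hbs.
have Hmr : mp r = - (mp Q * mp h) by rewrite Hr mpB mpMn mpM sub0r.
have HQ0 : mp Q = 0.
  apply/eqP; apply: contraT => HQ.
  have : (size (mp r) <= k)%N by apply/leq_sizeP => j Hj; rewrite coef_map rsz.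
  rewrite Hmr size_polyN size_mul // hbs addnS /= -{2}(add0n k) leq_add2r leqn0 size_poly_eq0.
  by rewrite (negbTE HQ).
have HQ2 := even_poly HQ0.
have Hmr0 : mp r = 0 by rewrite Hmr HQ0 mul0r oppr0.
have Hr2 := even_poly Hmr0.
move: HQ2 Hr2.
set Q' := \poly_(i < size Q) _.
set r' := \poly_(i < size r) _.
move=> HQ2 Hr2.
have Hr' : r' = S - Q' * h.
  by apply: two_inj; rewrite -Hr2 Hr HQ2 mulrnBl mulrnAl.
have hS : mp S = (lp g1 - lp g3) * (lp g1 - lp g4).
  rewrite /S !(mpD, mpN, mpM) !map_liftZ -!lpD hsum lpD -mulr2n F2p_two mulr0 sub0r.
  by apply: id2; rewrite -!lpD hsum.
have HD : forall i : 'I_k, D i = (r'`_i)%:~R.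
  move=> i; apply: (mulIf (_ : (2:rat) != 0)) => //.
  rewrite -rat_two -coefMn -Hr2 /r !coefB coefD !intrB intrD /D /fQ !mulrBl mulrDl !divfK //.
split.
  by move=> i; exists (r'`_i); rewrite /eqmod2 HD subrr mul0r rpred0.
apply: NNPP => Hn.
have Hall : forall i : 'I_k, eqmod2 (D i) 0.
  by move=> i; apply: NNPP => Hi; apply: Hn; exists i.
have Hr'0 : mp r' = 0.
  apply/polyP => j; rewrite coef_map coef0 /=.
  case: (ltnP j k) => Hj.
    have := Hall (Ordinal Hj); rewrite /eqmod2 HD subr0 => /intrP [m Hm].
    have -> : r'`_j = m * 2.
      apply: (intr_inj (R := rat)); rewrite intrM -Hm divfK //.
    by rewrite intrM (_ : ((2:int)%:~R : F2) = 2%:R) // F2_two mulr0.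
  have := congr1 (fun p : {poly int} => p`_j) Hr2; rewrite /= rsz // coefMn.
  by move=> /esym/eqP; rewrite mulrn_eq0 /= => /eqP ->.
have HSd : mp S = mp Q' * mp h.
  have -> : S = r' + Q' * h by rewrite Hr' subrK.
  by rewrite mpD mpM Hr'0 add0r.
have Hdv : mp h %| (lp g1 - lp g3) * (lp g1 - lp g4).
  by rewrite -hS HSd dvdp_mull.
have szd : forall g g' : 'rV[F2]_k, (size (lp g - lp g')%R <= k)%N.
  by move=> g g'; apply/leq_sizeP => j Hj; rewrite coefB !coef_lp_big // subr0.
have zero : forall p : {poly F2}, (size p <= k)%N -> mp h %| p -> p = 0.
  move=> p Hp Hdp; apply/eqP; apply: contraT => Hp0.
  by have := dvdp_leq Hp0 Hdp; rewrite hbs ltnNge Hp.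
case/orP: (irr_dvdM h_irr Hdv) => Hd.
  have E1 : g1 = g3 by apply: lp_inj; apply: subr0_eq; apply: zero (szd _ _) Hd.
  have E2 : g2 = g4 by apply: (@addrI _ g1); rewrite hsum E1.
  by move: hne; rewrite E1 E2 eqxx.
have E1 : g1 = g4 by apply: lp_inj; apply: subr0_eq; apply: zero (szd _ _) Hd.
have E2 : g2 = g3 by apply: (@addrI _ g1); rewrite hsum E1 addrC.
by move: hne; rewrite E1 E2 setUC eqxx.
Qed.
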